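(* Every $n\times n$ Gram-Lorentz matrix $X$ is the Gram matrix of some vectors $\ell_1,\dots,\ell_n\in\mathcal{L}_{\mathrm{rank}(X)+2}$.
   Context: The $m$-dimensional Lorentz cone is $\mathcal{L}_m:=\{(c,x)\in\mathbb{R}\times\mathbb{R}^{m-1}: c\ge\|x\|\}$. An $n\times n$ real symmetric matrix $X$ is Gram-Lorentz if there exist $m\ge1$ and vectors $\ell_1,\dots,\ell_n\in\mathcal{L}_m$ with $X_{ij}=\langle\ell_i,\ell_j\rangle$ for all $i,j$. *)

(* Defs.v *)
From HB Require Import structures.
From mathcomp Require Import all_boot all_order all_algebra.
From mathcomp Require Import reals.
Set Implicit Arguments. Unset Strict Implicit. Unset Printing Implicit Defensive.
Import Order.TTheory GRing.Theory Num.Theory.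
Local Open Scope ring_scope.

(* The Lorentz cone L_{m+1} in R x R^m, vectors represented as rows 'rV_(m.+1),
   coordinate 0 is c, coordinates lift ord0 i are the x-part. *)
Definition in_lorentz (R : realType) (m : nat) (v : 'rV[R]_m.+1) : Prop :=
  Num.sqrt (\sum_(i < m) (v ord0 (lift ord0 i)) ^+ 2) <= v ord0 ord0.

Definition is_gram_of (R : realType) (n m : nat) (X : 'M[R]_n) (L : 'M[R]_(n, m)) : Prop :=
  forall i j, X i j = \sum_(k < m) L i k * L j k.

Definition gram_lorentz (R : realType) (n : nat) (X : 'M[R]_n) : Prop :=
  exists (m : nat) (L : 'M[R]_(n, m.+1)),
    is_gram_of X L /\ forall i, in_lorentz (row i L).

(* Main.v *)
Require Import Defs.
From HB Require Import structures.
From mathcomp Require Import all_boot all_order all_algebra.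
From mathcomp Require Import reals.
From mathcomp Require Import zify ring lra.
Import Order.TTheory GRing.Theory Num.Theory.
Local Open Scope ring_scope.

Lemma gram_eq0 (R : realType) p q (M : 'M[R]_(p, q)) : M *m M^T = 0 -> M = 0.
Proof.
move=> h; apply/matrixP => i j; rewrite mxE.
have e : \sum_k (M i k) ^+ 2 = 0.
  have := congr1 (fun A : 'M[R]_p => A i i) h; rewrite !mxE => e; rewrite -[RHS]e.
  by apply: eq_bigr => k _; rewrite !mxE expr2.
have := (psumr_eq0P (P := xpredT) (fun k _ => sqr_ge0 (M i k)) e (i:=j) isT).
by move/eqP; rewrite sqrf_eq0 => /eqP.
Qed.

Lemma rank_gram (R : realType) p q (M : 'M[R]_(p, q)) : (\rank M <= \rank (M *m M^T))%N.
Proof.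
set K := kermx (M *m M^T).
have hK : K *m M = 0.
  apply: gram_eq0.
  by rewrite trmx_mul mulmxA -(mulmxA K M) mulmx_ker mul0mx.
have /mxrankS : (K <= kermx M)%MS by apply/sub_kermxP.
rewrite !mxrank_ker.
have := rank_leq_row M; have := rank_leq_row (M *m M^T); lia.
Qed.

Lemma lorentz_sum (R : realType) m (v : 'rV[R]_m.+1) :
  \sum_(i < m) (v ord0 (lift ord0 i)) ^+ 2 = (v *m v^T) ord0 ord0 - v ord0 ord0 ^+ 2.
Proof.
rewrite [X in _ = X - _]mxE big_ord_recl mxE -expr2.
rewrite addrAC subrr add0r.
by apply: eq_bigr => i _; rewrite mxE expr2.
Qed.

Lemma step (R : realType) n m (L : 'M[R]_(n, m.+2)) : (\rank L <= m)%N ->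
  exists L' : 'M[R]_(n, m.+1),
    L' *m L'^T = L *m L^T /\ forall i, L' i ord0 = L i ord0.
Proof.
move=> hr.
pose e0 : 'rV[R]_(m.+2) := delta_mx 0 0.
pose A := col_mx e0 L.
have rA : (\rank A < m.+2)%N.
  rewrite /A -addsmxE.
  apply: (leq_ltn_trans (mxrank_adds_leqif _ _).1).
  have := rank_leq_row e0; lia.
pose K := kermx A^T.
have rK : (0 < \rank K)%N by rewrite mxrank_ker mxrank_tr; lia.
have [i0 hi0] : exists i, row i K != 0.
  case: (pickP (fun i => row i K != 0)) => [i hi|h]; first by exists i.
  move: rK; suff -> : K = 0 by rewrite mxrank0.
  by apply/row_matrixP => i; rewrite row0; apply/eqP; move/negbFE: (h i).
pose u := row i0 K.
have hu : u != 0 := hi0.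
have uA : u *m A^T = 0 by rewrite /u -row_mul mulmx_ker row0.
clearbody u; move: uA; rewrite /A tr_col_mx mul_mx_row => /eqP; rewrite row_mx_eq0.
case/andP => /eqP ue0 /eqP uL.
have u00 : u 0 0 = 0.
  move: ue0; rewrite /e0 trmx_delta -colE => /matrixP/(_ 0 0).
  by rewrite !mxE.
have Lu : L *m u^T = 0 by rewrite -[L]trmxK -trmx_mul uL trmx0.
pose s := (u *m u^T) 0 0.
have s_gt0 : 0 < s.
  rewrite lt_def; apply/andP; split.
    apply/eqP => s0; move/negP: hu; apply; apply/eqP; apply: gram_eq0.
    rewrite [LHS]mx11_scalar; move: s0; rewrite /s => ->; by rewrite -scalemx1 scale0r.
  rewrite /s mxE; apply: sumr_ge0 => k _; rewrite mxE -expr2; exact: sqr_ge0.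
pose a := (Num.sqrt s)^-1 *: u.
have a00 : a 0 0 = 0 by rewrite mxE u00 mulr0.
have La : L *m a^T = 0 by rewrite /a linearZ /= -scalemxAr Lu scaler0.
have aa : (a *m a^T) 0 0 = 1.
  rewrite /a linearZ /= -scalemxAr -scalemxAl 2!mxE -/s mulrA -expr2.
  rewrite exprVn sqr_sqrtr ?mulVf //; [exact: lt0r_neq0 | exact: ltW].
clearbody a; clear u hu ue0 uL u00 Lu s s_gt0 hi0.
pose b : 'rV[R]_(m.+2) := delta_mx 0 ord_max.
pose w := a - b.
pose sw := (w *m w^T) 0 0.
pose c := 2 / sw.
pose P := w^T *m w.
pose H := 1%:M - c *: P.
have b00 : b 0 0 = 0 by rewrite mxE.
have bmax : b 0 ord_max = 1 by rewrite mxE !eqxx.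
have Lb : forall i, (L *m b^T) i 0 = L i ord_max.
  by move=> i; rewrite trmx_delta -colE mxE.
have ab : (a *m b^T) 0 0 = a 0 ord_max.
  by rewrite trmx_delta -colE mxE.
have bb : b *m b^T = 1%:M.
  rewrite trmx_delta mul_delta_mx; apply/matrixP => i j.
  by rewrite !mxE !ord1 eqxx.
clearbody b.
have sw_eq : sw = 2 - 2 * a 0 ord_max.
  rewrite /sw /w linearB /= mulmxBl !mulmxBr.
  have ba : b *m a^T = (a *m b^T)^T by rewrite trmx_mul trmxK.
  rewrite ba bb [a *m b^T]mx11_scalar [a *m a^T]mx11_scalar ab aa tr_scalar_mx.
  rewrite !mxE eqxx /=; lra.
have HT : H^T = H by rewrite /H linearB /= tr_scalar_mx linearZ /= /P trmx_mul trmxK.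
have PP : P *m P = sw *: P.
  by rewrite /P mulmxA -(mulmxA w^T) [w *m w^T]mx11_scalar mul_mx_scalar scalemxAl.
have HH : H *m H^T = 1%:M.
  rewrite HT /H mulmxBl !mulmxBr !mul1mx !mulmx1 -!scalemxAl -!scalemxAr PP !scalerA.
  have [sw0|swn0] := eqVneq sw 0.
    by rewrite /c sw0 invr0 mulr0 !mul0r !scale0r !subr0.
  have -> : c * c * sw = c + c.
    by rewrite -mulrA /c mulfVK // mulr_natr mulr2n.
  by rewrite scalerDl opprB addrK subrK.
pose L1 := L *m H.
have G1 : L1 *m L1^T = L *m L^T.
  by rewrite /L1 trmx_mul mulmxA -(mulmxA L) HH mulmx1.
have Lw : L *m w^T = - (L *m b^T) by rewrite /w linearB /= mulmxBr La sub0r.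
have L1e : forall i j, L1 i j = L i j + c * L i ord_max * w 0 j.
  move=> i j; rewrite /L1 /H mulmxBr mulmx1 -scalemxAr /P mulmxA Lw.
  rewrite mulNmx scalerN opprK mxE; congr (_ + _).
  by rewrite mxE mxE big_ord1 Lb mulrA.
have w0 : w 0 0 = 0 by rewrite /w !mxE a00 b00 subrr.
have wm : w 0 ord_max = a 0 ord_max - 1 by rewrite /w !mxE bmax.
have L1_0 : forall i, L1 i 0 = L i 0 by move=> i; rewrite L1e w0 mulr0 addr0.
have L1_m : forall i, L1 i ord_max = 0.
  move=> i; rewrite L1e wm.
  have [sw0|swn0] := eqVneq sw 0.
    have w_0 : w = 0.
      apply: gram_eq0; rewrite [LHS]mx11_scalar; move: sw0; rewrite /sw => ->.
      by rewrite -scalemx1 scale0r.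
    have ab' : a = b by apply/eqP; rewrite -subr_eq0 -/w w_0.
    have : (L *m b^T) i 0 = 0 by rewrite -ab' La mxE.
    by rewrite Lb => ->; rewrite mulr0 mul0r addr0.
  move: swn0; rewrite /c sw_eq => swn0.
  by field; exact: swn0.
clearbody L1.
exists (\matrix_(i < n, j < m.+1) L1 i (widen_ord (leqnSn _) j)); split; last first.
  move=> i; rewrite mxE -L1_0; congr (L1 i _); exact: val_inj.
rewrite -G1; apply/matrixP => i j.
rewrite [RHS]mxE big_ord_recr /= [L1^T _ _]mxE !L1_m ?mul0r ?mulr0 addr0 mxE.
by apply: eq_bigr => k _; rewrite !mxE.
Qed.

Lemma up (R : realType) n m k (L : 'M[R]_(n, m.+1)) : (m <= k)%N ->
  exists L' : 'M[R]_(n, k.+1),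
    L' *m L'^T = L *m L^T /\ forall i, L' i ord0 = L i ord0.
Proof.
elim: k => [|k IH] hmk.
  move: hmk; rewrite leqn0 => /eqP e; subst m; by exists L.
have [e|lt] : m = k.+1 \/ (m <= k)%N by lia.
  by subst m; exists L.
have [L2 [G2 C2]] := IH lt.
exists (\matrix_(i < n, j < k.+2) if (j < k.+1)%N then L2 i (inord j) else 0).
split.
  rewrite -G2; apply/matrixP => i j.
  rewrite mxE big_ord_recr /= !mxE ltnn mul0r addr0.
  apply: eq_bigr => l _; rewrite !mxE /= ltn_ord.
  by rewrite -(inord_val l) inordK ?ltn_ord // inord_val.
move=> i; rewrite mxE /= -C2; congr (L2 i _); apply: val_inj; rewrite /= inordK //.
Qed.

Lemma down (R : realType) n m : forall k (L : 'M[R]_(n, m.+1)), (\rank L < k)%N -> (k <= m)%N ->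
  exists L' : 'M[R]_(n, k.+1),
    L' *m L'^T = L *m L^T /\ forall i, L' i ord0 = L i ord0.
Proof.
elim: m => [|m IH] k L hr hk; first by lia.
have [e|lt] : k = m.+1 \/ (k <= m)%N by lia.
  by subst k; exists L.
have hr' : (\rank L <= m)%N by lia.
have [L1 [G1 C1]] := @step R n m L hr'.
have r1 : (\rank L1 <= \rank L)%N.
  have := @rank_gram R _ _ L1; rewrite G1 => h; exact: leq_trans h (mxrankM_maxl _ _).
have [L' [G' C']] := IH k L1 (leq_ltn_trans r1 hr) lt.
exists L'; split; first by rewrite G' G1.
by move=> i; rewrite C' C1.
Qed.

Lemma reduce (R : realType) n m k (L : 'M[R]_(n, m.+1)) : (\rank L < k)%N ->
  exists L' : 'M[R]_(n, k.+1),
    L' *m L'^T = L *m L^T /\ forall i, L' i ord0 = L i ord0.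
Proof.
move=> hr; have [hkm|hmk] := leqP k m; first exact: down.
by apply: up; exact: ltnW.
Qed.

Lemma row_gram (R : realType) n p (M : 'M[R]_(n, p)) i :
  (row i M *m (row i M)^T) ord0 ord0 = (M *m M^T) i i.
Proof. by rewrite !mxE; apply: eq_bigr => k _; rewrite !mxE. Qed.

Theorem lemma4p7 (R : realType) (n : nat) (X : 'M[R]_n) :
  gram_lorentz X ->
  exists L : 'M[R]_(n, (\rank X).+2),
    is_gram_of X L /\ forall i, in_lorentz (row i L).
Proof.
move=> [m [L [hg hl]]].
have XG : X = L *m L^T.
  by apply/matrixP => i j; rewrite hg mxE; apply: eq_bigr => k _; rewrite mxE.
have hr : (\rank L < (\rank X).+1)%N by rewrite ltnS XG (@rank_gram R).
have [L' [G' C']] := @reduce R _ _ _ _ hr.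
exists L'; split.
  move=> i j; rewrite {1}XG -G' mxE; apply: eq_bigr => k _; by rewrite mxE.
move=> i; have := hl i; rewrite /in_lorentz !(@lorentz_sum R) !(@row_gram R) G' !mxE C'.
done.
Qed.
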